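(* Let $p$ be an odd prime and $n = 2p$. Then the total graph $T(\Gamma(\mathbb{Z}_n))$ is not very cost effective.
   Context: $\mathbb{Z}_n$ is the ring of residue classes modulo $n$. The zero-divisor graph $\Gamma(\mathbb{Z}_n)$ has as vertices the nonzero zero-divisors of $\mathbb{Z}_n$, two distinct vertices being adjacent iff their product is $0$. The total graph $T(G)$ of a graph $G$ has vertex set $V(G)\cup E(G)$, with two vertices adjacent iff they are adjacent vertices of $G$, adjacent edges of $G$ (sharing an endpoint), or a vertex and an edge of $G$ incident to each other. For a graph $H=(V,E)$ and $S\subseteq V$, a vertex $v\in S$ is very cost effective if $|N(v)\cap S| < |N(v)\cap (V\setminus S)|$; $S$ is very cost effective if every vertex of $S$ is. A bipartition $\{S, V\setminus S\}$ is very cost effective if both parts are very cost effective, and $H$ is very cost effective if it has a very cost effective bipartition. *)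

(* Defs.v *)
From mathcomp Require Import all_boot.
Set Implicit Arguments. Unset Strict Implicit. Unset Printing Implicit Defensive.

(* A finite simple graph: a vertex set V inside a finite type T, with an
   adjacency relation adj (assumed symmetric and irreflexive on V where used). *)

Definition nbhd (T : finType) (V : {set T}) (adj : rel T) (v : T) : {set T} :=
  [set u in V | adj v u].

Definition vce_vertex (T : finType) (V : {set T}) (adj : rel T) (S : {set T}) (v : T) : bool :=
  #|nbhd V adj v :&: S| < #|nbhd V adj v :&: (V :\: S)|.

Definition vce_set (T : finType) (V : {set T}) (adj : rel T) (S : {set T}) : bool :=
  [forall v in S, vce_vertex V adj S v].

Definition vce_bipartition (T : finType) (V : {set T}) (adj : rel T) (S : {set T}) : bool :=
  (S \subset V) && vce_set V adj S && vce_set V adj (V :\: S).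

Definition very_cost_effective (T : finType) (V : {set T}) (adj : rel T) : Prop :=
  exists S : {set T}, vce_bipartition V adj S.

(* Total graph of (V, adj): vertices are inl v (v in V) and inr e where
   e = {x, y} is an edge (a 2-element subset of V whose elements are adjacent). *)
Definition is_edge (T : finType) (V : {set T}) (adj : rel T) (e : {set T}) : bool :=
  [exists x in V, exists y in V, adj x y && (e == [set x; y])].

Definition total_V (T : finType) (V : {set T}) (adj : rel T) : {set (T + {set T})} :=
  [set z | match z with
           | inl v => v \in V
           | inr e => is_edge V adj e
           end].

Definition total_adj (T : finType) (adj : rel T) : rel (T + {set T}) :=
  fun z w => match z, w with
  | inl u, inl v => adj u v
  | inr e, inr f => (e != f) && (e :&: f != set0)
  | inl v, inr e => v \in e
  | inr e, inl v => v \in e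
  end.

Definition zd_V (n : nat) : {set 'I_n} :=
  [set x : 'I_n | (x != 0 :> nat) &&
     [exists y : 'I_n, (y != 0 :> nat) && ((x * y) %% n == 0)]].

Definition zd_adj (n : nat) : rel 'I_n :=
  fun x y => (x != y) && ((x * y) %% n == 0).

Arguments zd_V n : clear implicits.
Arguments zd_adj n : clear implicits.

(* Main.v *)
Require Import Defs.
From mathcomp Require Import all_boot.
From mathcomp Require Import zify.

Lemma hcol1 (X : finType) (A B S : {set X}) (b : bool) : A \subset B ->
  A :&: (if b then S else B :\: S) = A :&: [set u | (u \in S) == b].
Proof.
move/subsetP=> AB; apply/setP=> u; rewrite !inE.
case: b; case uA: (u \in A) => //=; rewrite ?eqb_id //.
by rewrite in_setD (AB _ uA) andbT; case: (u \in S).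
Qed.

Lemma hcol2 (X : finType) (A B S : {set X}) (b : bool) : A \subset B ->
  A :&: (if b then B :\: S else B :\: (B :\: S)) = A :\: [set u | (u \in S) == b].
Proof.
move/subsetP=> AB; apply/setP=> u; rewrite !inE.
case: b; case uA: (u \in A) => //=; rewrite ?andbF // !in_setD (AB _ uA) ?andbT; case: (u \in S) => //.
Qed.


Lemma star_total_not_vce (T : finType) (V : {set T}) (adj : rel T) (c : T)
  (cV : c \in V)
  (Hirr : forall x, ~~ adj x x)
  (Hsym : forall x y, adj x y = adj y x)
  (Hleaf : forall x, x \in V -> x != c -> adj x c)
  (Hstar : forall x y, x \in V -> y \in V -> adj x y -> (x == c) || (y == c)) :
  ~ very_cost_effective (total_V V adj) (total_adj adj).
Proof.
move=> [S /andP[/andP[sS vS] vC]].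
have NT : forall z, nbhd (total_V V adj) (total_adj adj) z \subset total_V V adj.
  by move=> z; apply/subsetP=> u; rewrite /nbhd inE => /andP[].
have NE : forall z u, (u \in nbhd (total_V V adj) (total_adj adj) z) = (u \in total_V V adj) && total_adj adj z u by move=> z u; rewrite /nbhd inE.
have key : forall z, z \in total_V V adj -> #|nbhd (total_V V adj) (total_adj adj) z :&: [set u | (u \in S) == (z \in S)]|
    < #|nbhd (total_V V adj) (total_adj adj) z :\: [set u | (u \in S) == (z \in S)]|.
  move=> z zT; case zS: (z \in S).
  - move/forallP: vS => /(_ z); rewrite zS /= /vce_vertex.
    by rewrite -(hcol1 _ _ _ S _ (NT z)) -(hcol2 _ _ _ S _ (NT z)).
  - move/forallP: vC => /(_ z); rewrite !in_setD zS zT /= /vce_vertex.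
    by rewrite -(hcol1 _ _ _ S _ (NT z)) -(hcol2 _ _ _ S _ (NT z)).

have edge_in : forall l, l \in V -> l != c -> inr [set l; c] \in total_V V adj.
  move=> l lV lc; rewrite /total_V inE; apply/existsP; exists l; rewrite lV /=.
  by apply/existsP; exists c; rewrite cV Hleaf //= eqxx.
have leaf : forall l, l \in V -> l != c ->
    ((inl c \in S) != (inl l \in S)) && ((inr [set l; c] \in S) != (inl l \in S)).
  move=> l lV lc.
  have lT : inl l \in total_V V adj by rewrite /total_V inE.
  have sub : nbhd (total_V V adj) (total_adj adj) (inl l) \subset [set inl c; inr [set l; c]].
    apply/subsetP => u; rewrite NE; case: u => [v|e] /andP[vT ad].
    - rewrite /= in ad; move: vT; rewrite /total_V inE => vV.
      have := Hstar l v lV vV ad; rewrite (negbTE lc) /= => /eqP->.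
      by rewrite !inE eqxx.
    - rewrite /= in ad; move: vT; rewrite /total_V inE.
      move=> /existsP[x /andP[xV /existsP[y /andP[yV /andP[axy /eqP ee]]]]].
      subst e; move: ad; rewrite !inE => /orP[/eqP lx|/eqP ly].
      + subst x; have := Hstar l y lV yV axy; rewrite (negbTE lc) /= => /eqP->.
        exact: eqxx.
      + subst y; have := Hstar x l xV lV axy; rewrite (negbTE lc) orbF => /eqP->.
        by rewrite [[set c; l]]setUC eqxx orbT.
  have cN : inl c \in nbhd (total_V V adj) (total_adj adj) (inl l).
    by rewrite NE /= Hleaf // andbT /total_V inE.
  have eN : inr [set l; c] \in nbhd (total_V V adj) (total_adj adj) (inl l).
    by rewrite NE edge_in //= !inE eqxx.
  have k := key _ lT.
  have cs := cardsID [set u | (u \in S) == (inl l \in S)] (nbhd (total_V V adj) (total_adj adj) (inl l)).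
  have c2 := subset_leq_card sub; rewrite cards2 in c2.
  have c2' : #|nbhd (total_V V adj) (total_adj adj) (inl l)| <= 2.
    by apply: leq_trans c2 _; case: (_ != _).
  apply/andP; split; apply/negP => same.
  - have : 0 < #|nbhd (total_V V adj) (total_adj adj) (inl l) :&: [set u | (u \in S) == (inl l \in S)]|.
      by rewrite card_gt0; apply/set0Pn; exists (inl c); rewrite in_setI cN inE.
    move=> h; clear -k cs c2' h; lia.
  - have : 0 < #|nbhd (total_V V adj) (total_adj adj) (inl l) :&: [set u | (u \in S) == (inl l \in S)]|.
      by rewrite card_gt0; apply/set0Pn; exists (inr [set l; c]); rewrite in_setI eN inE.
    move=> h; clear -k cs c2' h; lia.

have cT : inl c \in total_V V adj by rewrite /total_V inE.
have kc := key _ cT.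
suff : #|nbhd (total_V V adj) (total_adj adj) (inl c) :\: [set u | (u \in S) == (inl c \in S)]|
   <= #|nbhd (total_V V adj) (total_adj adj) (inl c) :&: [set u | (u \in S) == (inl c \in S)]|.
  by rewrite leqNgt kc.
pose L := [set l | inl l \in nbhd (total_V V adj) (total_adj adj) (inl c) :\: [set u | (u \in S) == (inl c \in S)]].
have Lp : forall a, a \in L -> [/\ a \in V, a != c & adj c a].
  move=> a; rewrite inE in_setD NE => /andP[_ /andP[aT /= ca]].
  move: aT; rewrite /total_V inE => aV; split => //.
  by apply/negP => /eqP ac; move: ca; rewrite ac (negbTE (Hirr c)).
have h1 : nbhd (total_V V adj) (total_adj adj) (inl c) :\: [set u | (u \in S) == (inl c \in S)] \subset [set inl l | l in L].
  apply/subsetP => u; case: u => [v|e] uin.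
    by apply/imsetP; exists v => //; rewrite inE.
  exfalso; move: uin; rewrite in_setD NE inE => /andP[ne /andP[eT /= ce]].
  move: eT; rewrite /total_V inE.
  move=> /existsP[x /andP[xV /existsP[y /andP[yV /andP[axy /eqP ee]]]]].
  subst e; move: ce; rewrite !inE => /orP[/eqP cx|/eqP cy].
  - subst x; have yc : y != c.
      by apply/negP => /eqP yc; move: axy; rewrite yc (negbTE (Hirr c)).
    move: (leaf y yV yc) ne; rewrite [[set c; y]]setUC.
    by case: (inl c \in S); case: (inl y \in S); case: (inr _ \in S).
  - subst y; have xc : x != c.
      by apply/negP => /eqP xc; move: axy; rewrite xc (negbTE (Hirr c)).
    move: (leaf x xV xc) ne.
    by case: (inl c \in S); case: (inl x \in S); case: (inr _ \in S).
have h2 : #|[set inl l | l in L] : {set T + {set T}}| = #|L|.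
  by apply: card_imset => a b [].
have h3 : #|[set inr [set l; c] | l in L] : {set T + {set T}}| = #|L|.
  apply: card_in_imset => a b aL bL [] eab.
  have [_ ac _] := Lp a aL.
  have : a \in [set b; c] by rewrite -eab !inE eqxx.
  by rewrite !inE (negbTE ac) orbF => /eqP.
have h4 : [set inr [set l; c] | l in L] \subset nbhd (total_V V adj) (total_adj adj) (inl c) :&: [set u | (u \in S) == (inl c \in S)].
  apply/subsetP => u /imsetP[a aL ->].
  have [aV ac ca] := Lp a aL.
  rewrite in_setI NE edge_in //= !inE eqxx orbT /=.
  move: (leaf a aV ac).
  by case: (inl c \in S); case: (inl a \in S); case: (inr _ \in S).
apply: leq_trans (subset_leq_card h1) _.
by rewrite h2 -h3 subset_leq_card.
Qed.

Theorem mainTheorem8 (p : nat) (hp : prime p) (hodd : odd p) :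
  ~ very_cost_effective (total_V (zd_V (2 * p)%N) (zd_adj (2 * p)%N))
                        (total_adj (zd_adj (2 * p)%N)).
Proof.
have p0 := prime_gt0 hp.
have p2 : 2 < p.
  have := prime_gt1 hp; case: p hodd {hp p0} => [|[|[|q]]] //.
have hc : p < 2 * p by lia.
have h2 : 2 < 2 * p by lia.
pose c : 'I_(2 * p) := Ordinal hc.
have pdiv : forall x : 'I_(2 * p), (x != 0 :> nat) -> p %| x -> x = c.
  move=> x x0 /dvdnP[k xk]; apply: val_inj => /=.
  have := ltn_ord x; rewrite xk; move: x0; rewrite xk => x0 xlt.
  have k1 : k = 1 by nia.
  by rewrite k1 mul1n.
have pxy : forall x y : 'I_(2 * p), (x * y) %% (2 * p) == 0 -> (p %| x) || (p %| y).
  move=> x y H; rewrite -Euclid_dvdM //.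
  apply: dvdn_trans (dvdn_mull 2 (dvdnn p)) H.
apply: (@star_total_not_vce _ _ _ c).
- rewrite inE /=; apply/andP; split; first by rewrite -lt0n.
  apply/existsP; exists (Ordinal h2) => /=.
  by rewrite mulnC modnn.
- by move=> x; rewrite /zd_adj eqxx.
- by move=> x y; rewrite /zd_adj eq_sym (mulnC x).
- move=> x; rewrite inE => /andP[x0 /existsP[y /andP[y0 xy]]] xc.
  rewrite /zd_adj xc /=.
  have ev : ~~ odd x.
    apply/negP => ox.
    have := pxy _ _ xy; case/orP => [px|py].
      by move: xc; rewrite (pdiv _ x0 px) eqxx.
    have d2 : 2 %| y.
      have : 2 %| x * y by apply: dvdn_trans (dvdn_mulr p (dvdnn 2)) xy.
      by rewrite mulnC Gauss_dvdl // coprime2n.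
    have : 2 * p %| y by rewrite Gauss_dvd ?coprime2n // d2 py.
    move/dvdn_leq; rewrite lt0n y0 => /(_ isT); have := ltn_ord y; lia.
  have : 2 * p %| x * p by apply: dvdn_mul => //; rewrite dvdn2.
  by [].
- move=> x y; rewrite !inE => /andP[x0 _] /andP[y0 _] /andP[_ xy].
  case/orP: (pxy _ _ xy) => [px|py].
    by rewrite (pdiv _ x0 px) eqxx.
  by rewrite (pdiv _ y0 py) eqxx orbT.
Qed.
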